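(* Let $n\ge 2$ and set $k=\lfloor \log_2 n\rfloor$. Then $v(n)\le n-k$ if $n$ and $k$ have different parity, and $v(n)\le n-k+1$ otherwise.
   Context: A voter on a finite candidate set $A$ is a linear order (ranking) of $A$. A set of voters is a nonempty finite multiset of voters. A strong preference pattern on $A$ is a tournament $T$ on vertex set $A$. A set of voters $U$ generates $T$ if for every pair of distinct candidates $x,y$, the arc $(x,y)$ is in $T$ if and only if strictly more voters of $U$ rank $x$ above $y$ than rank $y$ above $x$. For a tournament $T$, $v(T)$ denotes the minimum size of a set of voters generating $T$, and $v(n)=\max\{v(T): T \text{ a tournament on } n \text{ vertices}\}$. *)

(* Defs.v *)
From mathcomp Require Import all_boot perm.
Set Implicit Arguments. Unset Strict Implicit. Unset Printing Implicit Defensive.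

(* A voter is a linear order on 'I_n,
   encoded as a bijection [p : {perm 'I_n}] giving each candidate its
   position (0 = top); voter p ranks x above y iff p x < p y. *)
Definition voter (n : nat) := {perm 'I_n}.

Definition ranks_above n (p : voter n) (x y : 'I_n) : bool := p x < p y.

Definition is_tournament n (T : rel 'I_n) : Prop :=
  (forall x, ~~ T x x) /\
  (forall x y, x != y -> (T x y) (+) (T y x)).

(* A set of voters is a nonempty finite multiset, i.e. a nonempty sequence
   (order irrelevant). *)
Definition generates n (U : seq (voter n)) (T : rel 'I_n) : Prop :=
  U != [::] /\
  forall x y : 'I_n, x != y ->
    (T x y = (count (fun p => ranks_above p y x) U <
              count (fun p => ranks_above p x y) U)).

(* Main.v *)
Require Import Defs.
From mathcomp Require Import all_boot perm.
From mathcomp Require Import zify.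
Set Implicit Arguments. Unset Strict Implicit. Unset Printing Implicit Defensive.


Lemma key_lt (c1 c2 u v N : nat) : u < N -> v < N ->
  (c1*N+u < c2*N+v) = (c1 < c2) || ((c1 == c2) && (u < v)).
Proof. move=> hu hv. case: (ltngtP c1 c2) => h /=.
- apply/idP. nia.
- apply/negbTE; rewrite -leqNgt. nia.
- subst. lia.
Qed.

Lemma tour_neg n (T : rel 'I_n) : is_tournament T ->
  forall x y, x != y -> T y x = ~~ T x y.
Proof. case=> _ H x y /H. by case: (T x y); case: (T y x). Qed.

Lemma tour_irr n (T : rel 'I_n) : is_tournament T -> forall x, T x x = false.
Proof. by case=> H _ x; apply/negbTE. Qed.

Definition consistent n (T : rel 'I_n) (S : {set 'I_n}) (g : 'I_n -> nat) :=
  forall x y, x \in S -> y \in S -> x != y -> T x y = (g y < g x).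

Lemma trans_exists n (T : rel 'I_n) : is_tournament T -> forall j (A : {set 'I_n}),
  2 ^ j <= #|A| -> exists (S : {set 'I_n}) (g : 'I_n -> nat), [/\ S \subset A, #|S| = j.+1 & consistent T S g].
Proof.
move=> HT; elim=> [|j IH] A HA.
  have /card_gt0P [x xA] : 0 < #|A| by rewrite expn0 in HA.
  exists [set x], (fun _ => 0); split.
  - by rewrite sub1set.
  - by rewrite cards1.
  - by move=> y z; rewrite !inE => /eqP-> /eqP->; rewrite eqxx.
have /card_gt0P [x xA] : 0 < #|A| by apply: leq_trans HA; rewrite expn_gt0.
set Out := [set y in A | T x y]; set In := [set y in A | T y x].
have Hsub : A :\ x \subset Out :|: In.
  apply/subsetP=> y; rewrite !inE => /andP [yx yA]; rewrite yA /=.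
  by rewrite (tour_neg HT yx); case: (T y x).
have Hc : #|A| = 1 + #|A :\ x| by rewrite (cardsD1 x A) xA.
have := subset_leq_card Hsub; rewrite cardsU => Hu.
have Hsum : 2 ^ j.+1 <= #|Out| + #|In| + 1 by lia.
have xO : x \notin Out by rewrite inE tour_irr // andbF.
have xI : x \notin In by rewrite inE tour_irr // andbF.
have OA : Out \subset A by apply/subsetP=> y; rewrite inE => /andP[].
have IA : In \subset A by apply/subsetP=> y; rewrite inE => /andP[].
case: (leqP (2 ^ j) #|Out|) => HO.
  have [S [g [SO cS Hg]]] := IH _ HO.
  have xS : x \notin S by apply: contra xO; apply: (subsetP SO).
  exists (x |: S), (fun y => if y == x then (\max_z g z).+1 else g y); split.
  - by rewrite subUset sub1set xA (subset_trans SO OA).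
  - by rewrite cardsU1 xS cS.
  - move=> y z; rewrite !inE.
    case: (eqVneq y x) => [->|yx]; case: (eqVneq z x) => [->|zx] //=.
    + move=> _ zS _; have := subsetP SO z zS; rewrite inE => /andP [_ ->].
      by rewrite ltnS leq_bigmax.
    + move=> yS _ _; have := subsetP SO y yS; rewrite inE => /andP [_ Hy].
      have xy : x != y by rewrite eq_sym.
      by rewrite (tour_neg HT xy) Hy /= ltnNge ltnW // ltnS leq_bigmax.
    + by move=> yS zS; apply: Hg.
have HI : 2 ^ j <= #|In| by rewrite expnS in Hsum; lia.
have [S [g [SI cS Hg]]] := IH _ HI.
have xS : x \notin S by apply: contra xI; apply: (subsetP SI).
exists (x |: S), (fun y => if y == x then 0 else (g y).+1); split.
- by rewrite subUset sub1set xA (subset_trans SI IA).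
- by rewrite cardsU1 xS cS.
- move=> y z; rewrite !inE.
  case: (eqVneq y x) => [->|yx]; case: (eqVneq z x) => [->|zx] //=.
  + move=> _ zS _; have := subsetP SI z zS; rewrite inE => /andP [_ Hz].
    by rewrite (tour_neg HT zx) Hz.
  + move=> yS _ _; have := subsetP SI y yS; rewrite inE => /andP [_ ->].
    by [].
  + by move=> yS zS; rewrite ltnS; apply: Hg.
Qed.


Lemma key_inj (c1 c2 u v N : nat) : u < N -> v < N -> c1*N+u = c2*N+v -> u = v.
Proof.
move=> hu hv /(congr1 (modn^~ N)); rewrite !modnMDl !modn_small //.
Qed.

Definition cnt n (U : seq ('I_n -> nat)) (x y : 'I_n) :=
  count (fun f => f y < f x) U.

Definition good n (T : rel 'I_n) (V : {set 'I_n}) U :=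
  forall x y, x \in V -> y \in V -> x != y -> T x y = (cnt U y x < cnt U x y).

Definition inv n (V : {set 'I_n}) (U : seq ('I_n -> nat)) :=
  forall f, List.In f U -> {in V &, injective f}.

Definition M n (f : 'I_n -> nat) := \max_(z : 'I_n) f z.

Definition f1 n (a b : 'I_n) (f : 'I_n -> nat) :=
  fun x => if x == a then (M f).+2 else if x == b then 0 else (f x).+1.

Lemma L_top n (a b u : 'I_n) L : u != a ->
  count (fun f => f1 a b f u < f1 a b f a) L = size L.
Proof.
move=> ua; rewrite -count_predT; apply: eq_count => f /=.
rewrite /f1 eqxx (negbTE ua); case: (u == b) => //.
by rewrite !ltnS leq_bigmax.
Qed.

Lemma L_top0 n (a b u : 'I_n) L : u != a ->
  count (fun f => f1 a b f a < f1 a b f u) L = 0.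
Proof.
move=> ua; rewrite -(count_pred0 L); apply: eq_count => f /=.
rewrite /f1 eqxx (negbTE ua); case: (u == b) => //.
by apply/negbTE; rewrite -leqNgt !ltnS (leq_trans (leq_bigmax _)).
Qed.

Lemma L_bot n (a b u : 'I_n) L : a != b -> u != b ->
  count (fun f => f1 a b f b < f1 a b f u) L = size L.
Proof.
move=> ab ub; rewrite -count_predT; apply: eq_count => f /=.
rewrite /f1 eqxx (negbTE ub) [b == a]eq_sym (negbTE ab); by case: (u == a).
Qed.

Lemma L_bot0 n (a b u : 'I_n) L : a != b -> u != b ->
  count (fun f => f1 a b f u < f1 a b f b) L = 0.
Proof.
move=> ab ub; rewrite -(count_pred0 L); apply: eq_count => f /=.
rewrite /f1 eqxx (negbTE ub) [b == a]eq_sym (negbTE ab); by case: (u == a).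
Qed.

Lemma L_old n (a b x y : 'I_n) L : x != a -> x != b -> y != a -> y != b ->
  count (fun f => f1 a b f y < f1 a b f x) L = count (fun f => f y < f x) L.
Proof.
move=> xa xb ya yb; apply: eq_count => f /=.
by rewrite /f1 (negbTE xa) (negbTE xb) (negbTE ya) (negbTE yb) ltnS.
Qed.

Lemma f1_inj n (V : {set 'I_n}) (a b : 'I_n) f : a \notin V -> b \notin V -> a != b ->
  {in V &, injective f} -> {in a |: (b |: V) &, injective (f1 a b f)}.
Proof.
move=> aV bV ab Hf x y; rewrite !inE /f1 => Hx Hy.
have := @leq_bigmax _ f x; have := @leq_bigmax _ f y; rewrite -/(M f).
case: (eqVneq x a) => xa; case: (eqVneq y a) => ya; try (by subst);
case: (eqVneq x b) => xb; case: (eqVneq y b) => yb; try (by subst); try lia.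
move: Hx Hy; rewrite (negbTE xa) (negbTE ya) (negbTE xb) (negbTE yb) /= => xV yV _ _ [].
exact: Hf.
Qed.

Definition cls_s n (T : rel 'I_n) (a b x : 'I_n) : nat :=
  if x == b then 5 else if x == a then 1 else
  if T x a then (if T b x then 3 else 2) else (if T b x then 4 else 0).
Definition cls_t n (T : rel 'I_n) (a b x : 'I_n) : nat :=
  if x == b then 3 else if x == a then 1 else
  if T x a then (if T b x then 2 else 4) else (if T b x then 0 else 5).
Definition sg n (T : rel 'I_n) (a b : 'I_n) : 'I_n -> nat :=
  fun x => cls_s T a b x * n.+1 + x.
Definition tg n (T : rel 'I_n) (a b : 'I_n) : 'I_n -> nat :=
  fun x => cls_t T a b x * n.+1 + (n - x).

Lemma sg_lt n (T : rel 'I_n) a b x y : (sg T a b y < sg T a b x) =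
  (cls_s T a b y < cls_s T a b x) || ((cls_s T a b y == cls_s T a b x) && (y < x)).
Proof. rewrite /sg key_lt //; apply: ltnW; apply: ltn_ord. Qed.

Lemma tg_lt n (T : rel 'I_n) a b x y : (tg T a b y < tg T a b x) =
  (cls_t T a b y < cls_t T a b x) || ((cls_t T a b y == cls_t T a b x) && (x < y)).
Proof.
rewrite /tg key_lt; try lia. have hx := ltn_ord x; have hy := ltn_ord y.
congr (_ || (_ && _)); apply/idP/idP; lia.
Qed.

Lemma sg_inj n (T : rel 'I_n) a b : injective (sg T a b).
Proof.
move=> x y /key_inj H; apply: val_inj; apply: H; apply: ltnW; apply: ltn_ord.
Qed.

Lemma tg_inj n (T : rel 'I_n) a b : injective (tg T a b).
Proof.
move=> x y /key_inj H; have hx := ltn_ord x; have hy := ltn_ord y.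
have : n - x = n - y by apply: H; lia.
move=> E; apply: ord_inj; lia.
Qed.

Definition U2 n (T : rel 'I_n) (a b : 'I_n) (U : seq ('I_n -> nat)) :=
  map (f1 a b) (take (size U).+1./2 U) ++ map (f1 b a) (drop (size U).+1./2 U)
  ++ [:: sg T a b; tg T a b].

Lemma cntU2 n (T : rel 'I_n) a b U x y : cnt (U2 T a b U) x y =
  count (fun f => f1 a b f y < f1 a b f x) (take (size U).+1./2 U) +
  count (fun f => f1 b a f y < f1 b a f x) (drop (size U).+1./2 U) +
  (sg T a b y < sg T a b x) + (tg T a b y < tg T a b x).
Proof. by rewrite /cnt /U2 !count_cat !count_map /= addn0 !addnA. Qed.

Lemma old_pair n (T : rel 'I_n) a b x y : x != a -> x != b -> y != a -> y != b ->
  x != y -> (sg T a b y < sg T a b x) + (tg T a b y < tg T a b x) = 1.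
Proof.
move=> xa xb ya yb xy; rewrite sg_lt tg_lt /cls_s /cls_t.
rewrite (negbTE xa) (negbTE xb) (negbTE ya) (negbTE yb).
have : (val x != val y) by [].
case: (T x a); case: (T b x); case: (T y a); case: (T b y) => /=;
case: (ltngtP x y); lia.
Qed.


Lemma In_take T (g : T) h U : List.In g (take h U) -> List.In g U.
Proof. by move=> H; rewrite -(cat_take_drop h U); apply/List.in_app_iff; left. Qed.
Lemma In_drop T (g : T) h U : List.In g (drop h U) -> List.In g U.
Proof. by move=> H; rewrite -(cat_take_drop h U); apply/List.in_app_iff; right. Qed.

Lemma step n (T : rel 'I_n) : is_tournament T -> forall (V : {set 'I_n}) U a b,
  a \notin V -> b \notin V -> a != b -> T b a -> odd (size U) ->
  inv V U -> good T V U ->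
  exists U', [/\ size U' = (size U).+2, inv (a |: (b |: V)) U' &
                 good T (a |: (b |: V)) U'].
Proof.
move=> HT V U a b aV bV ab Tba oU iU gU.
exists (U2 T a b U); split.
- rewrite /U2 !size_cat !size_map /=.
  have := size_cat (take (uphalf (size U)) U) (drop (uphalf (size U)) U).
  rewrite cat_take_drop; lia.
- move=> f; rewrite /U2 !List.in_app_iff => -[|[]].
  + move/List.in_map_iff => [g [<- Hg]].
    apply: f1_inj => //; apply: iU; exact: In_take Hg.
  + move/List.in_map_iff => [g [<- Hg]].
    rewrite setUCA; apply: f1_inj => //; first by rewrite eq_sym.
    apply: iU; exact: In_drop Hg.
  + move=> [<-|[<-|[]]] x y _ _; [exact: sg_inj | exact: tg_inj].
set m := size U; set h := m.+1./2.
have Hh : h = (m - h).+1.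
  have := odd_double_half m.+1; rewrite /= oU /= -/h -mul2n. lia.
have st : size (take h U) = h by rewrite size_takel //; lia.
have sd : size (drop h U) = m - h by rewrite size_drop.
have ba : b != a by rewrite eq_sym.
have Tab : T a b = false by rewrite (tour_neg HT ba) Tba.
move=> x y; rewrite !inE => Hx Hy xy; rewrite !cntU2.
have Hva : forall u, u \in V -> u != a by move=> u uV; apply: contraNneq aV => <-.
have Hvb : forall u, u \in V -> u != b by move=> u uV; apply: contraNneq bV => <-.
have Ecnt : forall P, count P U = count P (take h U) + count P (drop h U).
  by move=> P; rewrite -count_cat cat_take_drop.
case/or3P: Hx => [/eqP Ex|/eqP Ex|xV]; case/or3P: Hy => [/eqP Ey|/eqP Ey|yV];
  subst; rewrite ?eqxx // in xy.
- rewrite ?L_top ?L_top0 ?L_bot ?L_bot0 // Tab st sd !sg_lt !tg_lt /cls_s /cls_t.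
  rewrite ?eqxx ?(negbTE ab) ?(negbTE ba) /=; clear -Hh; lia.
- have ua := Hva _ yV; have ub := Hvb _ yV.
  have bu : b != y by rewrite eq_sym.
  have au : a != y by rewrite eq_sym.
  rewrite ?L_top ?L_top0 ?L_bot ?L_bot0 // st sd !sg_lt !tg_lt /cls_s /cls_t.
  rewrite (tour_neg HT ua) ?eqxx ?(negbTE ab) ?(negbTE ua) ?(negbTE ub) /=.
  case: (T y a); case: (T b y) => /=; clear -Hh; lia.
- rewrite ?L_top ?L_top0 ?L_bot ?L_bot0 // Tba st sd !sg_lt !tg_lt /cls_s /cls_t.
  rewrite ?eqxx ?(negbTE ab) ?(negbTE ba) /=; clear -Hh; lia.
- have ua := Hva _ yV; have ub := Hvb _ yV.
  have bu : b != y by rewrite eq_sym.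
  have au : a != y by rewrite eq_sym.
  rewrite ?L_top ?L_top0 ?L_bot ?L_bot0 // st sd !sg_lt !tg_lt /cls_s /cls_t.
  rewrite ?eqxx ?(negbTE ba) ?(negbTE ua) ?(negbTE ub) /=.
  case: (T y a); case: (T b y) => /=; clear -Hh; lia.
- have ua := Hva _ xV; have ub := Hvb _ xV.
  have bu : b != x by rewrite eq_sym.
  have au : a != x by rewrite eq_sym.
  rewrite ?L_top ?L_top0 ?L_bot ?L_bot0 // st sd !sg_lt !tg_lt /cls_s /cls_t.
  rewrite ?eqxx ?(negbTE ab) ?(negbTE ua) ?(negbTE ub) /=.
  case: (T x a); case: (T b x) => /=; clear -Hh; lia.
- have ua := Hva _ xV; have ub := Hvb _ xV.
  have bu : b != x by rewrite eq_sym.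
  have au : a != x by rewrite eq_sym.
  rewrite ?L_top ?L_top0 ?L_bot ?L_bot0 // st sd !sg_lt !tg_lt /cls_s /cls_t.
  rewrite (tour_neg HT bu) ?eqxx ?(negbTE ba) ?(negbTE ua) ?(negbTE ub) /=.
  case: (T x a); case: (T b x) => /=; clear -Hh; lia.
- have xa := Hva _ xV; have xb := Hvb _ xV.
  have ya := Hva _ yV; have yb := Hvb _ yV.
  have yx : y != x by rewrite eq_sym.
  rewrite (gU x y xV yV xy) /cnt !L_old //.
  have := old_pair T xa xb ya yb xy; have := old_pair T ya yb xa xb yx.
  rewrite (Ecnt (fun f => f y < f x)) (Ecnt (fun f => f x < f y)).
  rewrite -/m -/h; move=> E1 E2; clear -E1 E2; lia.
Qed.


Lemma good_eq n (T : rel 'I_n) (V1 V2 : {set 'I_n}) U :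
  V1 =i V2 -> good T V1 U -> good T V2 U.
Proof. by move=> E G x y; rewrite -!E; apply: G. Qed.

Lemma inv_eq n (V1 V2 : {set 'I_n}) U : V1 =i V2 -> inv V1 U -> inv V2 U.
Proof. by move=> E G f /G H x y; rewrite -!E; apply: H. Qed.

Lemma base n (T : rel 'I_n) (S : {set 'I_n}) g : is_tournament T ->
  consistent T S g -> good T S [:: g] /\ inv S [:: g].
Proof.
move=> HT Hg; split.
  move=> x y xS yS xy; rewrite /cnt /= !addn0 (Hg x y xS yS xy).
  have yx : y != x by rewrite eq_sym.
  have := Hg y x yS xS yx; rewrite (tour_neg HT xy) (Hg x y xS yS xy).
  by case: (ltngtP (g x) (g y)).
move=> f [<-|[]] x y xS yS E; case: (eqVneq x y) => // xy.
have yx : y != x by rewrite eq_sym.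
have := Hg y x yS xS yx; rewrite (tour_neg HT xy) (Hg x y xS yS xy) E ltnn.
by [].
Qed.

Lemma grow n (T : rel 'I_n) (S : {set 'I_n}) g : is_tournament T ->
  consistent T S g -> forall k (W : seq 'I_n), size W <= k -> uniq W ->
  (forall w, w \in W -> w \notin S) -> ~~ odd (size W) ->
  exists U, [/\ size U = (size W).+1, inv (S :|: [set w in W]) U &
                good T (S :|: [set w in W]) U].
Proof.
move=> HT Hg; have [gb ib] := base HT Hg.
have E0 : S =i S :|: [set w in [::]] by move=> x; rewrite !inE orbF.
elim=> [|k IH] [|w1 [|w2 W]] //= sW uW dW eW.
- by exists [:: g]; split => //; [apply: inv_eq ib | apply: good_eq gb].
- by exists [:: g]; split => //; [apply: inv_eq ib | apply: good_eq gb].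
move: uW; rewrite !inE negb_or => /andP [/andP [w12 w1W] /andP [w2W uW]].
have sW' : size W <= k by lia.
have dW' : forall w, w \in W -> w \notin S.
  by move=> w wW; apply: dW; rewrite !inE wW !orbT.
have eW' : ~~ odd (size W) by rewrite !negbK in eW.
have [U [sU iU gU]] := IH W sW' uW dW' eW'.
have w1S : w1 \notin S by apply: dW; rewrite inE eqxx.
have w2S : w2 \notin S by apply: dW; rewrite !inE eqxx orbT.
have n1 : w1 \notin S :|: [set w in W] by rewrite !inE negb_or w1S.
have n2 : w2 \notin S :|: [set w in W] by rewrite !inE negb_or w2S.
have oU : odd (size U) by rewrite sU /= eW'.
have w21 : w2 != w1 by rewrite eq_sym.
case Hw: (T w1 w2).
- have [U' [sU' iU' gU']] := step HT n2 n1 w21 Hw oU iU gU.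
  have E : w2 |: (w1 |: (S :|: [set w in W])) =i S :|: [set w in [:: w1, w2 & W]].
    by move=> x; rewrite !inE; case: (x == w1); case: (x == w2); case: (x \in S).
  exists U'; split; [by rewrite sU' sU | exact: inv_eq E iU' | exact: good_eq E gU'].
- have Tw : T w2 w1 by rewrite (tour_neg HT w12) Hw.
  have [U' [sU' iU' gU']] := step HT n1 n2 w12 Tw oU iU gU.
  have E : w1 |: (w2 |: (S :|: [set w in W])) =i S :|: [set w in [:: w1, w2 & W]].
    by move=> x; rewrite !inE; case: (x == w1); case: (x == w2); case: (x \in S).
  exists U'; split; [by rewrite sU' sU | exact: inv_eq E iU' | exact: good_eq E gU'].
Qed.


Definition rk n (f : 'I_n -> nat) (x : 'I_n) := #|[set z | f x < f z]|.

Lemma rk_lt n (f : 'I_n -> nat) : injective f ->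
  forall x y, (rk f x < rk f y) = (f y < f x).
Proof.
move=> Hf.
have H : forall x y, f y < f x -> rk f x < rk f y.
  move=> x y lt; apply: proper_card; apply/properP; split.
    by apply/subsetP=> z; rewrite !inE => /(ltn_trans lt).
  by exists x; rewrite !inE ?ltnn.
move=> x y; case: (ltngtP (f y) (f x)) => [/H -> //| /H lt | E].
  by apply/negbTE; rewrite -leqNgt ltnW.
by rewrite (Hf _ _ E) ltnn.
Qed.

Lemma rk_ltn n (f : 'I_n -> nat) x : rk f x < n.
Proof.
have : [set z | f x < f z] \subset [set~ x].
  by apply/subsetP=> z; rewrite !inE; apply: contraTneq => ->; rewrite ltnn.
move/subset_leq_card; rewrite cardsC1 card_ord /rk.
have := ltn_ord x; lia.
Qed.

Lemma rk_inj n (f : 'I_n -> nat) : injective f ->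
  injective (fun x => Ordinal (rk_ltn f x)).
Proof.
move=> Hf x y /(congr1 val) /= E; apply: (Hf).
case: (ltngtP (f x) (f y)) => // lt.
  by move: (rk_lt Hf y x); rewrite lt E ltnn.
by move: (rk_lt Hf x y); rewrite lt E ltnn.
Qed.

Definition fk n (f : 'I_n -> nat) := fun x : 'I_n => f x * n + x.

Lemma fk_inj n (f : 'I_n -> nat) : injective (fk f).
Proof. move=> x y /key_inj E; apply: val_inj; apply: E; apply: ltn_ord. Qed.

Definition tp n (f : 'I_n -> nat) : voter n := perm (rk_inj (@fk_inj n f)).

Lemma tp_above n (f : 'I_n -> nat) : injective f ->
  forall x y, ranks_above (tp f) x y = (f y < f x).
Proof.
move=> Hf x y; rewrite /tp /ranks_above !permE /= rk_lt; last exact: fk_inj.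
rewrite /fk key_lt ?ltn_ord //.
case: (eqVneq x y) => [->|xy]; first by rewrite !ltnn eqxx.
case: (eqVneq (f y) (f x)) => [/Hf E|_]; last by rewrite orbF.
by rewrite E eqxx in xy.
Qed.

Lemma count_tp n (U : seq ('I_n -> nat)) x y :
  (forall f, List.In f U -> injective f) ->
  count (fun p => ranks_above p x y) (map (@tp n) U) = cnt U x y.
Proof.
elim: U => //= f U IH H; rewrite /cnt /= tp_above; last by apply: H; left.
by rewrite IH // => g Hg; apply: H; right.
Qed.


Unset Implicit Arguments.
Theorem mainTheorem3 (n : nat) : 2 <= n ->
  let k := trunc_log 2 n in
  forall T : rel 'I_n, is_tournament T ->
  exists U : seq (voter n), generates U T /\
    size U <= (if odd n != odd k then n - k else n - k + 1).
Proof.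
move=> n2 k T HT.
have n0 : 0 < n by lia.
have /andP [kb1 kb2] := trunc_log_bounds (leqnn 2) n0; rewrite -/k in kb1 kb2.
have k1 : 1 <= k.
  case: k kb2 {kb1} => // ; rewrite expn1; lia.
set j := if odd n != odd k then k else k.-1.
have jk : j <= k by rewrite /j; case: ifP => _; lia.
have hj : 2 ^ j <= #|[set: 'I_n]|.
  rewrite cardsT card_ord; apply: leq_trans kb1; exact: leq_pexp2l.
have [S [g [_ cS Hg]]] := trans_exists HT hj.
have cSn : #|S| + #|~: S| = n by rewrite cardsC card_ord.
set W := enum (~: S).
have sW : size W = #|~: S| by rewrite /W -cardE.
have uW : uniq W by apply: enum_uniq.
have dW : forall w, w \in W -> w \notin S by move=> w; rewrite mem_enum inE.
have eW : ~~ odd (size W).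
  have -> : size W = n - j.+1 by lia.
  rewrite oddB; last by lia.
  rewrite /j; case: ifP => Hb; last rewrite prednK //; move: Hb => /=;
  by case: (odd n); case: (odd k).
have [U [sU iU gU]] := grow HT Hg (leqnn (size W)) uW dW eW.
have EV : S :|: [set w in W] =i [set: 'I_n].
  by move=> x; rewrite !inE mem_enum inE orbN.
have iU' : forall f, List.In f U -> injective f.
  by move=> f /(inv_eq EV iU) H x y; apply: H; rewrite inE.
exists (map (@tp n) U); split; last first.
  rewrite size_map sU sW; move: cS; rewrite /j; case: ifP => _ cS'; lia.
split.
  by case: (U) sU.
move=> x y xy; rewrite !count_tp //.
by apply: (good_eq EV gU); rewrite ?inE.
Qed.
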